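(* Let $t$ be an indeterminate, let $\mathbf K$ be an infinite subset of $\mathbb C\setminus\{0,1\}$, and let $\mathbb F$ be a subring of $\mathbb C(t)$ with $$\mathbb C[t,t^{-1}]\subseteq \mathbb F\subseteq\{f/g : f,g\in\mathbb C[t],\ g(1)\neq 0,\ g(\lambda)\neq0\ \forall \lambda\in\mathbf K\}.$$ Let $A$ be the $\mathbb F$-algebra generated by $x_1,\dots,x_n$ subject to finitely many relations $f_1,\dots,f_m$, each $f_i=\sum_{\mathbf x}a^i_{\mathbf x}(t)\mathbf x$ an $\mathbb F$-linear combination of monomials $\mathbf x$ in the $x_j$. Assume $t-1$ is a nonzero, nonunit, non-zero-divisor of $A$ and that $A_1:=A/(t-1)A$ is commutative; let $\gamma_1:A\to A_1$ be the canonical map. For $\lambda\in\mathbf K$ let $A_\lambda$ be the $\mathbb C$-algebra generated by $x_1,\dots,x_n$ subject to the relations $f_i|_{t=\lambda}=\sum_{\mathbf x}a^i_{\mathbf x}(\lambda)\mathbf x$, and let $\gamma_\lambda:A\to A_\lambda$ be the $\mathbb C$-algebra homomorphism with $\gamma_\lambda(t)=\lambda$, $\gamma_\lambda(x_j)=x_j$. Let $\widehat A=\prod_{\lambda\in\mathbf K}A_\lambda$ and $\gamma:A\to\widehat A$, $\gamma(a)=(\gamma_\lambda(a))_{\lambda\in\mathbf K}$. Assume there is an $\mathbb F$-basis $\{\xi_i\}_{i\in I}$ of $A$ such that $\{\gamma_1(\xi_i)\}_{i\in I}$ is a $\mathbb C$-basis of $A_1$ and $\{\gamma_\lambda(\xi_i)\}_{i\in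 I}$ is a $\mathbb C$-basis of $A_\lambda$ for every $\lambda\in\mathbf K$. Then $\gamma$ is a monomorphism of $\mathbb C$-algebras.
   Context: All algebras are over $\mathbb C$ and unital. Elements of $\mathbb F$ are regular at $1$ and at every $\lambda\in\mathbf K$, so evaluating coefficients at $t=\lambda$ or $t=1$ is well defined. *)

(* Defs.v *)
From HB Require Import structures.
From mathcomp Require Import all_boot all_order all_algebra.
From mathcomp Require Import complex.
From mathcomp Require Import reals.
From Stdlib Require Import ClassicalEpsilon.
Set Implicit Arguments. Unset Strict Implicit. Unset Printing Implicit Defensive.
Import Order.TTheory GRing.Theory Num.Theory.
Local Open Scope ring_scope.

Notation CC R := (R[i]).
Notation CT R := {fraction {poly (R[i])}}.
Notation tofr p := (@FracField.tofrac _ p).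
Notation tvar R := (tofr ('X : {poly (R[i])})).
Notation cst R c := (tofr ((c : R[i])%:P)).

(* evaluation at z of a rational function x that is regular at z:
   the common value f(z)/g(z) for any representation x = f/g with g(z) <> 0
   (this value does not depend on the representation). *)
Definition feval (R : realType) (z : R[i]) (x : CT R) : R[i] :=
  epsilon (inhabits 0) (fun v => exists f g : {poly R[i]},
     g.[z] != 0 /\ x = tofr f / tofr g /\ v = f.[z] / g.[z]).

(* An element is a function from monomials (words in the letters 'I_n) to
   coefficients; genuine elements are those of finite support. *)
Definition ncpoly (K : Type) (n : nat) := seq 'I_n -> K.

Section NC.
Variables (K : pzRingType) (n : nat).
Definition ncfin (p : ncpoly K n) : Prop :=
  exists s : seq (seq 'I_n), forall w, w \notin s -> p w = 0.
Definition ncover (S : K -> Prop) (p : ncpoly K n) : Prop :=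
  ncfin p /\ forall w, S (p w).
Definition nc0 : ncpoly K n := fun _ => 0.
Definition ncadd (p q : ncpoly K n) : ncpoly K n := fun w => p w + q w.
Definition ncsub (p q : ncpoly K n) : ncpoly K n := fun w => p w - q w.
Definition ncscale (c : K) (p : ncpoly K n) : ncpoly K n := fun w => c * p w.
Definition ncmul (p q : ncpoly K n) : ncpoly K n :=
  fun w => \sum_(i < (size w).+1) p (take i w) * q (drop i w).
Definition ncmono (u : seq 'I_n) : ncpoly K n := fun w => (w == u)%:R.
Definition ncone : ncpoly K n := ncmono [::].
Definition ncvar (j : 'I_n) : ncpoly K n := ncmono [:: j].

Definition ncideal (S : K -> Prop) (m : nat) (fs : 'I_m -> ncpoly K n)
    (p : ncpoly K n) : Prop :=
  exists (k : nat) (u v : 'I_k -> ncpoly K n) (idx : 'I_k -> 'I_m),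
    (forall j, ncover S (u j) /\ ncover S (v j)) /\
    p = \big[ncadd/nc0]_(j < k) ncmul (ncmul (u j) (fs (idx j))) (v j).
End NC.

(* A family xi : I -> V of elements of (the set D of representatives of) the
   quotient D / J is a basis over the scalars S (acting by sc):
   every element is a finite S-combination of the xi modulo J, and every
   finite S-combination of pairwise distinct xi lying in J is trivial. *)
Definition quot_basis (K : pzRingType) (V I : Type) (S : K -> Prop)
    (sc : K -> V -> V) (add sub : V -> V -> V) (z : V)
    (D J : V -> Prop) (xi : I -> V) : Prop :=
  (forall p, D p -> exists (k : nat) (idx : 'I_k -> I) (c : 'I_k -> K),
      (forall j, S (c j)) /\
      J (sub p (\big[add/z]_(j < k) sc (c j) (xi (idx j))))) /\
  (forall (k : nat) (idx : 'I_k -> I) (c : 'I_k -> K),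
      injective idx -> (forall j, S (c j)) ->
      J (\big[add/z]_(j < k) sc (c j) (xi (idx j))) -> forall j, c j = 0).

Definition gam (R : realType) (n : nat) (z : R[i]) (p : ncpoly (CT R) n)
  : ncpoly (R[i]) n := fun w => feval z (p w).

(* the ideal (t-1)A + (relations) defining A_1 = A/(t-1)A, in F<x> *)
Definition ideal1 (R : realType) (n m : nat) (F : CT R -> Prop)
    (fs : 'I_m -> ncpoly (CT R) n) (p : ncpoly (CT R) n) : Prop :=
  exists q r, ncideal F fs q /\ ncover F r /\
    p = ncadd q (ncscale (tvar R - 1) r).

(* Main.v *)
Require Import Defs.
From HB Require Import structures.
From mathcomp Require Import all_boot all_order all_algebra.
From mathcomp Require Import complex reals.
Import Order.TTheory GRing.Theory Num.Theory.
Local Open Scope ring_scope.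

From Stdlib Require Import Classical ClassicalEpsilon FunctionalExtensionality.

Section Fev.
Variables (R : realType) (z : R[i]).

Definition reg (x : CT R) := exists f g : {poly R[i]}, g.[z] != 0 /\ x = tofr f / tofr g.

Lemma pn0 {g : {poly R[i]}} : g.[z] != 0 -> tofr g != 0.
Proof. by move=> h; rewrite tofrac_eq0; apply: contra h => /eqP ->; rewrite horner0. Qed.

Lemma frac_cross {f g f' g' : {poly R[i]}} : tofr g != 0 -> tofr g' != 0 ->
  tofr f / tofr g = tofr f' / tofr g' -> f * g' = f' * g.
Proof.
move=> g0 g'0 E; apply/eqP; rewrite -tofrac_eq !tofracM.
have := @eqr_div _ (tofr f) (tofr g) (tofr f') (tofr g') g0 g'0.
by rewrite E eqxx => <-.
Qed.

Lemma feval_eq {f g : {poly R[i]}} {x} : g.[z] != 0 -> x = tofr f / tofr g ->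
  feval z x = f.[z] / g.[z].
Proof.
move=> gz E; rewrite /feval.
set P := fun v => _.
have : P (f.[z] / g.[z]) by exists f, g.
move=> /(ex_intro P) /(epsilon_spec (inhabits 0)).
move: (epsilon _ _) => v [f' [g' [g'z [E' ->]]]].
have EE : tofr f' / tofr g' = tofr f / tofr g by rewrite -E' E.
have := frac_cross (pn0 g'z) (pn0 gz) EE. move=> /(congr1 (horner^~ z)).
rewrite !hornerM => h. by apply/eqP; rewrite eqr_div // h.
Qed.

Lemma reg_feval {x} : reg x -> exists f g : {poly R[i]}, g.[z] != 0 /\ x = tofr f / tofr g /\ feval z x = f.[z]/g.[z].
Proof. by move=> [f [g [gz E]]]; exists f, g; split=>//; split=>//; apply: feval_eq. Qed.

Lemma regD {x y} : reg x -> reg y -> reg (x + y) /\ feval z (x + y) = feval z x + feval z y.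
Proof.
move=> /reg_feval [f1 [g1 [h1 [E1 ->]]]] /reg_feval [f2 [g2 [h2 [E2 ->]]]].
have h : (g1 * g2).[z] != 0 by rewrite hornerM mulf_neq0.
have E : x + y = tofr (f1 * g2 + f2 * g1) / tofr (g1 * g2).
  by rewrite E1 E2 tofracD !tofracM addf_div // ?pn0.
split; first by exists (f1 * g2 + f2 * g1), (g1 * g2).
by rewrite (feval_eq h E) hornerD !hornerM addf_div.
Qed.

Lemma regM {x y} : reg x -> reg y -> reg (x * y) /\ feval z (x * y) = feval z x * feval z y.
Proof.
move=> /reg_feval [f1 [g1 [h1 [E1 ->]]]] /reg_feval [f2 [g2 [h2 [E2 ->]]]].
have h : (g1 * g2).[z] != 0 by rewrite hornerM mulf_neq0.
have E : x * y = tofr (f1 * f2) / tofr (g1 * g2).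
  by rewrite E1 E2 !tofracM mulf_div.
split; first by exists (f1 * f2), (g1 * g2).
by rewrite (feval_eq h E) !hornerM mulf_div.
Qed.

Lemma regN {x} : reg x -> reg (- x) /\ feval z (- x) = - feval z x.
Proof.
move=> /reg_feval [f1 [g1 [h1 [E1 ->]]]].
have E : - x = tofr (- f1) / tofr g1 by rewrite E1 tofracN mulNr.
split; first by exists (- f1), g1.
by rewrite (feval_eq h1 E) hornerN mulNr.
Qed.

Lemma regC c : reg (cst R c) /\ feval z (cst R c) = c.
Proof.
have h : (1 : {poly R[i]}).[z] != 0 by rewrite hornerC oner_neq0.
have E : cst R c = tofr (c%:P) / tofr 1 by rewrite tofrac1 divr1.
split; first by exists c%:P, 1.
by rewrite (feval_eq h E) !hornerC divr1.
Qed.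

Lemma regX : reg (tvar R) /\ feval z (tvar R) = z.
Proof.
have h : (1 : {poly R[i]}).[z] != 0 by rewrite hornerC oner_neq0.
have E : tvar R = tofr 'X / tofr 1 by rewrite tofrac1 divr1.
split; first by exists 'X, 1.
by rewrite (feval_eq h E) hornerX hornerC divr1.
Qed.

Lemma reg0 : reg 0 /\ feval z 0 = 0.
Proof. by have := regC 0; rewrite tofrac0. Qed.
Lemma reg1 : reg 1 /\ feval z 1 = 1.
Proof. by have := regC 1; rewrite tofrac1. Qed.

Lemma regS (k : nat) (G : 'I_k -> CT R) : (forall j, reg (G j)) ->
  reg (\sum_(j < k) G j) /\ feval z (\sum_(j < k) G j) = \sum_(j < k) feval z (G j).
Proof.
move=> H; elim/big_rec2: _ => [|j a b _ [ra <-]]; first exact: reg0.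
by have [] := regD (H j) ra.
Qed.


End Fev.
Arguments reg {R}. Arguments regS {R z k G}. Arguments reg0 {R}. Arguments reg1 {R}.
Arguments regM {R z x y}. Arguments regD {R z x y}. Arguments regN {R z x}.
Arguments regC {R}. Arguments regX {R}. Arguments feval_eq {R z f g x}.

Section NCgen.
Variables (K : pzRingType) (n : nat).
Implicit Types p q : ncpoly K n.

Lemma ncbig_app (k : nat) (P : 'I_k -> ncpoly K n) w :
  (\big[@ncadd K n/@nc0 K n]_(j < k) P j) w = \sum_(j < k) P j w.
Proof. by elim/big_rec2: _ => // j a b _ <-. Qed.

Lemma ncext p q : (forall w, p w = q w) -> p = q.
Proof. exact: functional_extensionality. Qed.

Lemma ncmulZl c p q : ncmul (ncscale c p) q = ncscale c (ncmul p q).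
Proof.
apply: ncext => w; rewrite /ncmul /ncscale mulr_sumr; apply: eq_bigr => i _.
by rewrite mulrA.
Qed.

Lemma ideal0 (S : K -> Prop) m (fs : 'I_m -> ncpoly K n) : ncideal S fs (@nc0 K n).
Proof.
exists 0, (fun _ => @nc0 K n), (fun _ => @nc0 K n), (fun j : 'I_0 => match j with Ordinal _ h => False_rect _ (notF h) end).
split; first by case.
by rewrite big_ord0.
Qed.

Lemma ideal_add (S : K -> Prop) m (fs : 'I_m -> ncpoly K n) p q :
  ncideal S fs p -> ncideal S fs q -> ncideal S fs (ncadd p q).
Proof.
move=> [k1 [u1 [v1 [i1 [H1 ->]]]]] [k2 [u2 [v2 [i2 [H2 ->]]]]].
pose u j := match split j with inl a => u1 a | inr b => u2 b end.
pose v j := match split j with inl a => v1 a | inr b => v2 b end.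
pose ix j := match split j with inl a => i1 a | inr b => i2 b end.
exists (k1 + k2), u, v, ix; split.
  by move=> j; rewrite /u /v; case: (split j).
apply: ncext => w; rewrite /ncadd !ncbig_app big_split_ord /=.
congr (_ + _); apply: eq_bigr => j _; rewrite /u /v /ix.
  by have -> : split (lshift k2 j) = inl j by exact: (unsplitK (inl j)).
by have -> : split (rshift k1 j) = inr j by exact: (unsplitK (inr j)).
Qed.

Lemma ideal_opp (S : K -> Prop) m (fs : 'I_m -> ncpoly K n) p :
  (forall x, S x -> S (- x)) ->
  ncideal S fs p -> ncideal S fs (ncscale (-1) p).
Proof.
move=> HS [k [u [v [ix [H ->]]]]].
exists k, (fun j => ncscale (-1) (u j)), v, ix; split.
  move=> j; have [[[s Hs] Su] Hv] := H j; split=> //; split.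
    by exists s => w /Hs; rewrite /ncscale => ->; rewrite mulr0.
  by move=> w; rewrite /ncscale mulN1r; apply: HS.
apply: ncext => w; rewrite /ncscale !ncbig_app mulr_sumr; apply: eq_bigr => j _.
by rewrite !ncmulZl.
Qed.

End NCgen.

Section Spec.
Variables (R : realType) (Kset : R[i] -> Prop) (F : CT R -> Prop) (n m : nat)
  (fs : 'I_m -> ncpoly (CT R) n).
Hypotheses (HKinf : ~ exists s : seq (R[i]), forall z, Kset z -> z \in s)
  (HF0 : F 0) (HF1 : F 1)
  (HFadd : forall x y, F x -> F y -> F (x + y))
  (HFopp : forall x, F x -> F (- x))
  (HFmul : forall x y, F x -> F y -> F (x * y))
  (HFreg : forall x, F x -> exists f g : {poly R[i]},
      g.[1] != 0 /\ (forall z, Kset z -> g.[z] != 0) /\ x = tofr f / tofr g)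
  (Hfs : forall i, ncover F (fs i)).

Definition Fv (p : ncpoly (CT R) n) := forall w, F (p w).
Implicit Types p q : ncpoly (CT R) n.

Lemma regF {z : R[i]} {x : CT R} : Kset z -> F x -> reg z x.
Proof. by move=> Kz /(HFreg _) [f [g [_ [Hg E]]]]; exists f, g; split=> //; apply: Hg. Qed.

Lemma FS k (G : 'I_k -> CT R) : (forall j, F (G j)) -> F (\sum_(j < k) G j).
Proof. by move=> H; elim/big_rec: _ => // j a _; apply: HFadd. Qed.

Lemma Fv_mul p q : Fv p -> Fv q -> Fv (ncmul p q).
Proof. by move=> Hp Hq w; apply: FS => j; apply: HFmul. Qed.

Lemma Fv_add p q : Fv p -> Fv q -> Fv (ncadd p q).
Proof. by move=> Hp Hq w; apply: HFadd. Qed.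

Lemma Fv_sub p q : Fv p -> Fv q -> Fv (ncsub p q).
Proof. by move=> Hp Hq w; apply: HFadd => //; apply: HFopp. Qed.

Lemma Fv_scale c p : F c -> Fv p -> Fv (ncscale c p).
Proof. by move=> Hc Hp w; apply: HFmul. Qed.

Lemma Fv_big k (P : 'I_k -> ncpoly (CT R) n) : (forall j, Fv (P j)) ->
  Fv (\big[@ncadd _ n/@nc0 _ n]_(j < k) P j).
Proof. by move=> H w; rewrite ncbig_app; apply: FS => j; apply: H. Qed.

Lemma gam_fin (z : R[i]) (p : ncpoly (CT R) n) : ncfin p -> ncfin (gam z p).
Proof. by move=> [s Hs]; exists s => w /Hs; rewrite /gam => ->; apply: (reg0 z).2. Qed.

Section Z.
Variables (z : R[i]) (Kz : Kset z).

Lemma gam_mul p q : Fv p -> Fv q -> gam z (ncmul p q) = ncmul (gam z p) (gam z q).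
Proof.
move=> Hp Hq; apply: ncext => w; rewrite /gam /ncmul.
have [_ ->] := regS (G := fun j : 'I_(size w).+1 => p (take j w) * q (drop j w))
  (fun j => (regM (regF Kz (Hp _)) (regF Kz (Hq _))).1).
by apply: eq_bigr => j _; have [_ ->] := regM (regF Kz (Hp (take j w))) (regF Kz (Hq (drop j w))).
Qed.

Lemma gam_add p q : Fv p -> Fv q -> gam z (ncadd p q) = ncadd (gam z p) (gam z q).
Proof.
move=> Hp Hq; apply: ncext => w; rewrite /gam /ncadd.
by have [_ ->] := regD (regF Kz (Hp w)) (regF Kz (Hq w)).
Qed.

Lemma gam_sub p q : Fv p -> Fv q -> gam z (ncsub p q) = ncsub (gam z p) (gam z q).
Proof.
move=> Hp Hq; apply: ncext => w; rewrite /gam /ncsub.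
have [r1 e1] := regN (regF Kz (Hq w)).
by have [_ ->] := regD (regF Kz (Hp w)) r1; rewrite e1.
Qed.

Lemma gam_scale c p : F c -> Fv p -> gam z (ncscale c p) = ncscale (feval z c) (gam z p).
Proof.
move=> Hc Hp; apply: ncext => w; rewrite /gam /ncscale.
by have [_ ->] := regM (regF Kz Hc) (regF Kz (Hp w)).
Qed.

Lemma gam_big k (P : 'I_k -> ncpoly (CT R) n) : (forall j, Fv (P j)) ->
  gam z (\big[@ncadd _ n/@nc0 _ n]_(j < k) P j) = \big[@ncadd _ n/@nc0 _ n]_(j < k) gam z (P j).
Proof.
move=> H; apply: ncext => w; rewrite /gam !ncbig_app.
by have [_ ->] := regS (G := fun j => P j w) (fun j => regF Kz (H j w)).
Qed.

Lemma gam_nat (b : bool) : feval z (b%:R) = b%:R.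
Proof. by case: b; [exact: (reg1 z).2 | exact: (reg0 z).2]. Qed.

Lemma reg_nat (b : bool) : reg z (b%:R).
Proof. by case: b; [exact: (reg1 z).1 | exact: (reg0 z).1]. Qed.

Lemma gam_ideal p : ncideal F fs p ->
  ncideal (fun _ => True) (fun i => gam z (fs i)) (gam z p).
Proof.
move=> [k [u [v [ix [H ->]]]]].
have Fu j : Fv (u j) by case: (H j) => [[_ ?] _].
have Fv' j : Fv (v j) by case: (H j) => [_ [_ ?]].
have Ff j : Fv (fs j) by case: (Hfs j).
exists k, (fun j => gam z (u j)), (fun j => gam z (v j)), ix; split.
  move=> j; case: (H j) => [[f1 _] [f2 _]]; split; split=> //; exact: gam_fin.
rewrite gam_big; last by move=> j; apply: Fv_mul => //; apply: Fv_mul.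
by apply: eq_bigr => j _; rewrite gam_mul ?gam_mul //; apply: Fv_mul.
Qed.

End Z.

Lemma Kseq k : exists s : seq (R[i]), uniq s /\ size s = k /\ (forall z, z \in s -> Kset z).
Proof.
elim: k => [|k [s [us [ss Hs]]]]; first by exists [::].
case: (classic (exists z, Kset z /\ z \notin s)) => [[z [Kz zs]]|hn]; last first.
  exfalso; apply: HKinf; exists s => z Kz; apply/negPn/negP => zs; apply: hn.
  by exists z.
exists (z :: s); split; first by rewrite /= zs.
split; first by rewrite /= ss.
by move=> y; rewrite inE => /orP [/eqP -> //|]; apply: Hs.
Qed.

Lemma zero_rat c : F c -> (forall z, Kset z -> feval z c = 0) -> c = 0.
Proof.
move=> Fc H; have [f [g [_ [Hg E]]]] := HFreg _ Fc.
have fz z : Kset z -> f.[z] = 0.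
  move=> Kz; have := H z Kz; rewrite (feval_eq (Hg z Kz) E) => /eqP.
  by rewrite mulf_eq0 invr_eq0 (negbTE (Hg z Kz)) orbF => /eqP.
case: (eqVneq f 0) => [f0|fn0]; first by rewrite E f0 tofrac0 mul0r.
have [s [us [ss Hs]]] := Kseq (size f).
have Hall : all (root f) s by apply/allP => z /Hs Kz; rewrite /root fz.
by have := max_poly_roots fn0 Hall us; rewrite ss ltnn.
Qed.

Variables (I : Type) (xi : I -> ncpoly (CT R) n).
Hypotheses (Hxi : forall i, ncover F (xi i))
  (HbasisAl : forall z, Kset z ->
      quot_basis (fun _ : R[i] => True) (@ncscale (R[i]) n)
        (@ncadd _ n) (@ncsub _ n) (@nc0 (R[i]) n) (@ncfin _ n)
        (ncideal (fun _ => True) (fun i => gam z (fs i)))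
        (fun i => gam z (xi i))).

Definition Sx k (idx : 'I_k -> I) (c : 'I_k -> CT R) :=
  \big[@ncadd _ n/@nc0 _ n]_(j < k) ncscale (c j) (xi (idx j)).

Arguments Sx {k}.

Lemma Fv_xi i : Fv (xi i). Proof. by case: (Hxi i). Qed.

Lemma Fv_Sx (k : nat) (idx : 'I_k -> I) (c : 'I_k -> CT R) : (forall j, F (c j)) -> Fv (Sx idx c).
Proof. by move=> Hc; apply: Fv_big => j; apply: Fv_scale => //; apply: Fv_xi. Qed.

Lemma claim k : forall (idx : 'I_k -> I) (c : 'I_k -> CT R), (forall j, F (c j)) ->
  (forall z, Kset z -> ncideal (fun _ => True) (fun i => gam z (fs i)) (gam z (Sx idx c))) ->
  ncideal F fs (Sx idx c).
Proof.
elim: k => [|k IH] idx c Hc HS.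
  have -> : Sx idx c = @nc0 _ n by rewrite /Sx big_ord0.
  exact: ideal0.
case: (classic (injective idx)) => [inj|ninj].
  have c0 j : c j = 0.
    apply: zero_rat => // z Kz.
    have := (HbasisAl z Kz).2 k.+1 idx (fun j => feval z (c j)) inj (fun _ => Logic.I).
    apply.
    have E : gam z (Sx idx c) = \big[@ncadd _ n/@nc0 _ n]_(j0 < k.+1)
        ncscale (feval z (c j0)) (gam z (xi (idx j0))).
      rewrite /Sx gam_big //; last by move=> j0; apply: Fv_scale => //; apply: Fv_xi.
      apply: eq_bigr => j0 _; apply: gam_scale => //; apply: Fv_xi.
    by rewrite -E; apply: HS.
  have -> : Sx idx c = @nc0 _ n.
    by apply: ncext => w; rewrite /Sx ncbig_app big1 // => j _; rewrite /ncscale c0 mul0r.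
  exact: ideal0.
have [j1 [j2 [eq12 ne12]]] : exists j1 j2, idx j1 = idx j2 /\ j1 != j2.
  apply: NNPP => hn; apply: ninj => a b eab; apply/eqP; apply: NNPP => /negP nab.
  by apply: hn; exists a, b.
pose d i := c (lift j2 i) + (lift j2 i == j1)%:R * c j2.
pose idx' i := idx (lift j2 i).
have Hd i : F (d i).
  apply: HFadd; first exact: Hc.
  by apply: HFmul => //; case: (_ == _).
have E : Sx idx c = Sx idx' d.
  apply: ncext => w; rewrite /Sx !ncbig_app /ncscale.
  pose X j := xi (idx j) w.
  have T1 : \sum_(j < k.+1) (j == j1)%:R * X j = X j1.
    rewrite (bigD1 j1) //= eqxx mul1r big1 ?addr0 // => j /negbTE ->.
    by rewrite mul0r.
  have T2 : \sum_(j < k.+1) (j == j1)%:R * X j =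
            \sum_(i < k) (lift j2 i == j1)%:R * X (lift j2 i).
    by rewrite (bigD1_ord j2) //= eq_sym (negbTE ne12) mul0r add0r.
  rewrite (bigD1_ord j2) //=.
  rewrite /d /idx'.
  under [in RHS]eq_bigr => i _ do rewrite mulrDl -mulrA mulrCA.
  rewrite big_split /= addrC; congr (_ + _).
  rewrite -mulr_sumr.
  have := T2; rewrite T1 => <-.
  by rewrite /X eq12.
rewrite E in HS *; exact: IH.
Qed.

Hypotheses
  (HFlaurent : forall (p : {poly R[i]}) (k : nat), F (tofr p / tvar R ^+ k))
  (HbasisA : quot_basis F (@ncscale (CT R) n) (@ncadd _ n) (@ncsub _ n)
               (@nc0 (CT R) n) (ncover F) (ncideal F fs) xi).

Lemma Fcst c : F (cst R c).
Proof. by have := HFlaurent c%:P 0; rewrite expr0 divr1. Qed.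

Lemma final :
  (forall z, Kset z ->
     (forall p : ncpoly (CT R) n, ncover F p -> ncfin (gam z p)) /\
     (forall p : ncpoly (CT R) n, ncover F p -> ncideal F fs p ->
        ncideal (fun _ => True) (fun i => gam z (fs i)) (gam z p)) /\
     (forall p q : ncpoly (CT R) n, ncover F p -> ncover F q ->
        gam z (ncadd p q) = ncadd (gam z p) (gam z q)) /\
     (forall p q : ncpoly (CT R) n, ncover F p -> ncover F q ->
        gam z (ncmul p q) = ncmul (gam z p) (gam z q)) /\
     (forall (c : R[i]) (p : ncpoly (CT R) n), ncover F p ->
        gam z (ncscale (cst R c) p) = ncscale c (gam z p)) /\
     gam z (@ncone (CT R) n) = @ncone (R[i]) n /\
     gam z (ncscale (tvar R) (@ncone (CT R) n)) = ncscale z (@ncone (R[i]) n) /\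
     (forall j, gam z (@ncvar (CT R) n j) = @ncvar (R[i]) n j)) /\
  (forall p : ncpoly (CT R) n, ncover F p ->
     (forall z, Kset z ->
        ncideal (fun _ => True) (fun i => gam z (fs i)) (gam z p)) ->
     ncideal F fs p).
Proof.
split.
  move=> z Kz; split; first by move=> p [h _]; apply: gam_fin.
  split; first by move=> p _; apply: gam_ideal.
  split; first by move=> p q [_ ?] [_ ?]; apply: gam_add.
  split; first by move=> p q [_ ?] [_ ?]; apply: gam_mul.
  split.
    move=> c p [_ Hp]; rewrite gam_scale //; last exact: Fcst.
    by rewrite (regC z c).2.
  split; first by apply: ncext => w; rewrite /gam /ncone /ncmono gam_nat.
  split.
    apply: ncext => w; rewrite /gam /ncscale /ncone /ncmono.
    have [_ ->] := regM (regX z).1 (reg_nat z (w == [::])).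
    by rewrite (regX z).2 gam_nat.
  by move=> j; apply: ncext => w; rewrite /gam /ncvar /ncmono gam_nat.
move=> p Hp Hz.
have [k [idx [c [Fc Hd]]]] := HbasisA.1 p Hp.
have FS' : Fv (Sx idx c) by apply: Fv_Sx.
have HS : ncideal F fs (Sx idx c).
  apply: claim => // z Kz.
  have h1 := gam_ideal z Kz _ Hd.
  rewrite (gam_sub z Kz) // in h1; last by case: Hp.
  have -> : gam z (Sx idx c) =
      ncadd (gam z p) (ncscale (-1) (ncsub (gam z p) (gam z (Sx idx c)))).
    by apply: ncext => w; rewrite /ncadd /ncscale /ncsub mulN1r opprB addrC subrK.
  apply: ideal_add; first exact: Hz.
  by apply: ideal_opp.
have -> : p = ncadd (ncsub p (Sx idx c)) (Sx idx c).
  by apply: ncext => w; rewrite /ncadd /ncsub subrK.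
exact: ideal_add.
Qed.
End Spec.

Theorem lemma1p2
  (R : realType)
  (Kset : R[i] -> Prop)
  (F : CT R -> Prop)
  (n m : nat) (fs : 'I_m -> ncpoly (CT R) n)
  (I : Type) (xi : I -> ncpoly (CT R) n)
  (* K is an infinite subset of C \ {0,1} *)
  (HK01 : forall z, Kset z -> z != 0 /\ z != 1)
  (HKinf : ~ exists s : seq (R[i]), forall z, Kset z -> z \in s)
  (* F is a subring of C(t) *)
  (HF0 : F 0) (HF1 : F 1)
  (HFadd : forall x y, F x -> F y -> F (x + y))
  (HFopp : forall x, F x -> F (- x))
  (HFmul : forall x y, F x -> F y -> F (x * y))
  (* C[t,t^-1] is contained in F *)
  (HFlaurent : forall (p : {poly R[i]}) (k : nat), F (tofr p / tvar R ^+ k))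
  (* F consists of rational functions f/g with g(1) <> 0, g(lambda) <> 0 *)
  (HFreg : forall x, F x -> exists f g : {poly R[i]},
      g.[1] != 0 /\ (forall z, Kset z -> g.[z] != 0) /\ x = tofr f / tofr g)
  (* relations are F-linear combinations of monomials *)
  (Hfs : forall i, ncover F (fs i))
  (* t - 1 is nonzero in A *)
  (Ht1nz : ~ ncideal F fs (ncscale (tvar R - 1) (@ncone (CT R) n)))
  (* t - 1 is not a unit of A *)
  (Ht1nu : ~ exists q : ncpoly (CT R) n, ncover F q /\
      ncideal F fs (ncsub (ncmul (ncscale (tvar R - 1) (@ncone (CT R) n)) q)
                          (@ncone (CT R) n)) /\
      ncideal F fs (ncsub (ncmul q (ncscale (tvar R - 1) (@ncone (CT R) n)))
                          (@ncone (CT R) n)))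
  (* t - 1 is not a zero divisor of A *)
  (Ht1nzd : forall q : ncpoly (CT R) n, ncover F q ->
      ncideal F fs (ncmul (ncscale (tvar R - 1) (@ncone (CT R) n)) q) ->
      ncideal F fs q)
  (* A_1 = A/(t-1)A is commutative *)
  (HA1comm : forall p q : ncpoly (CT R) n, ncover F p -> ncover F q ->
      ideal1 F fs (ncsub (ncmul p q) (ncmul q p)))
  (* {xi_i} is an F-basis of A *)
  (Hxi : forall i, ncover F (xi i))
  (HbasisA : quot_basis F (@ncscale (CT R) n) (@ncadd _ n) (@ncsub _ n)
               (@nc0 (CT R) n) (ncover F) (ncideal F fs) xi)
  (* {gamma_1 xi_i} is a C-basis of A_1 *)
  (HbasisA1 : quot_basis (fun _ : R[i] => True)
               (fun c p => ncscale (cst R c) p) (@ncadd _ n) (@ncsub _ n)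
               (@nc0 (CT R) n) (ncover F) (ideal1 F fs) xi)
  (* {gamma_lambda xi_i} is a C-basis of A_lambda for every lambda in K *)
  (HbasisAl : forall z, Kset z ->
      quot_basis (fun _ : R[i] => True) (@ncscale (R[i]) n)
        (@ncadd _ n) (@ncsub _ n) (@nc0 (R[i]) n) (@ncfin _ n)
        (ncideal (fun _ => True) (fun i => gam z (fs i)))
        (fun i => gam z (xi i))) :
  (* gamma = (gamma_lambda)_lambda is a well-defined C-algebra homomorphism
     A -> prod_lambda A_lambda ... *)
  (forall z, Kset z ->
     (forall p : ncpoly (CT R) n, ncover F p -> ncfin (gam z p)) /\
     (forall p : ncpoly (CT R) n, ncover F p -> ncideal F fs p ->
        ncideal (fun _ => True) (fun i => gam z (fs i)) (gam z p)) /\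
     (forall p q : ncpoly (CT R) n, ncover F p -> ncover F q ->
        gam z (ncadd p q) = ncadd (gam z p) (gam z q)) /\
     (forall p q : ncpoly (CT R) n, ncover F p -> ncover F q ->
        gam z (ncmul p q) = ncmul (gam z p) (gam z q)) /\
     (forall (c : R[i]) (p : ncpoly (CT R) n), ncover F p ->
        gam z (ncscale (cst R c) p) = ncscale c (gam z p)) /\
     gam z (@ncone (CT R) n) = @ncone (R[i]) n /\
     gam z (ncscale (tvar R) (@ncone (CT R) n)) = ncscale z (@ncone (R[i]) n) /\
     (forall j, gam z (@ncvar (CT R) n j) = @ncvar (R[i]) n j)) /\
  (* ... which is injective *)
  (forall p : ncpoly (CT R) n, ncover F p ->
     (forall z, Kset z ->
        ncideal (fun _ => True) (fun i => gam z (fs i)) (gam z p)) ->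
     ncideal F fs p).
Proof.
exact: (@final R Kset F n m fs HKinf HF0 HF1 HFadd HFmul HFreg Hfs I xi Hxi HbasisAl HFlaurent HbasisA).
Qed.
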